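(* Let $\Gamma$ be a simple, undirected, connected graph with order $p\ge 2$, maximum degree $\Delta$ and domination number $\gamma(\Gamma)$. Then $$\gamma_{[3R]}(\Gamma)\ge\left\lceil\frac{2p+(\Delta-1)\gamma(\Gamma)}{\Delta}\right\rceil.$$ Moreover, this bound holds with equality for every such graph having a vertex adjacent to all other vertices.
   Context: $\gamma(\Gamma)$ is the minimum size of a set $S$ of vertices such that every vertex outside $S$ has a neighbour in $S$. For $h:V\to\{0,1,2,3,4\}$, let $AN(v)=\{w\in N(v):h(w)\ge 1\}$, $AN[v]=AN(v)\cup\{v\}$ and $h(S)=\sum_{u\in S}h(u)$; $h$ is a triple Roman dominating function (3RDF) if every $v$ with $h(v)<3$ satisfies $h(AN[v])\ge|AN(v)|+3$, and $\gamma_{[3R]}(\Gamma)$ is the minimum weight $h(V)$ of a 3RDF. *)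

(* Defs.v *)
From mathcomp Require Import all_boot all_order.
Set Implicit Arguments. Unset Strict Implicit. Unset Printing Implicit Defensive.

(* A simple undirected graph on a finite vertex type T is given by a
   symmetric irreflexive relation e : rel T (checked in the theorem). *)
Section Graph.
Variables (T : finType) (e : rel T).

Definition nbr (v : T) : {set T} := [set w | e v w].
Definition deg (v : T) : nat := #|nbr v|.
Definition maxdeg : nat := \max_(v : T) deg v.

Definition dominating (S : {set T}) : bool :=
  [forall v, (v \in S) || [exists w in S, e v w]].
(* gamma: minimum size of a dominating set (setT is dominating, so the
   default value #|T| is never below the true minimum) *)
Definition domination_number : nat :=
  \big[minn/#|T|]_(S : {set T} | dominating S) #|S|.

Definition AN (h : {ffun T -> 'I_5}) (v : T) : {set T} :=
  [set w in nbr v | 1 <= h w].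
Definition hsum (h : {ffun T -> 'I_5}) (S : {set T}) : nat :=
  \sum_(u in S) (h u : nat).
Definition is3RDF (h : {ffun T -> 'I_5}) : bool :=
  [forall v, (h v < 3) ==> (#|AN h v| + 3 <= hsum h (v |: AN h v))].
Definition weight (h : {ffun T -> 'I_5}) : nat := \sum_(v : T) (h v : nat).
(* triple Roman domination number (the constant function 4 is a 3RDF of
   weight 4 #|T|, so the default is harmless) *)
Definition triple_roman_number : nat :=
  \big[minn/(4 * #|T|)]_(h : {ffun T -> 'I_5} | is3RDF h) weight h.
End Graph.

Definition ceil_div (a b : nat) : nat := (a + b.-1) %/ b.

(* Main.v *)
Require Import Defs.
From mathcomp Require Import all_boot all_order.
From mathcomp Require Import zify.

Lemma bigmin_le (I : finType) (P : pred I) (F : I -> nat) d i0 :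
  P i0 -> \big[minn/d]_(i | P i) F i <= F i0.
Proof.
move=> Pi0; have : i0 \in index_enum I by rewrite mem_index_enum.
elim: (index_enum I) => [|i r IH] //=; rewrite big_cons inE.
case/orP => [/eqP <-|/IH {}IH]; first by rewrite Pi0 geq_minl.
by case: (P i) => //; rewrite geq_min IH orbT.
Qed.

Section S.
Variables (T : finType) (e : rel T).
Hypotheses (e_sym : symmetric e) (e_irr : irreflexive e).

Lemma deg_le v : deg e v <= maxdeg e.
Proof. rewrite /maxdeg; exact: (@leq_bigmax T (fun v => deg e v) v). Qed.

Lemma charge (P : pred T) (c : T -> nat) :
  \sum_(v | P v) \sum_(w in nbr e v) c w <= maxdeg e * \sum_w c w.
Proof.
rewrite big_distrr /=.
have -> : \sum_(v | P v) \sum_(w in nbr e v) c w =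
          \sum_(v | P v) \sum_(w | e v w) c w.
  by apply: eq_bigr => v _; apply: eq_bigl => w; rewrite inE.
rewrite (exchange_big_dep predT) //=.
apply: leq_sum => w _.
apply: (@leq_trans (\sum_(v in nbr e w) c w)).
  rewrite [X in _ <= X]big_mkcond [X in X <= _]big_mkcond /=.
  apply: leq_sum => v _; rewrite inE e_sym.
  by case: (P v); case: (e w v).
by rewrite sum_nat_const leq_mul2r (deg_le w) orbT.
Qed.

Lemma local (h : {ffun T -> 'I_5}) v : is3RDF e h -> h v < 3 ->
  3 - h v <= \sum_(w in nbr e v) (h w - 1).
Proof.
move=> /forallP /(_ v) /implyP H /H {H}.
have vN : v \notin AN e h v by rewrite inE inE e_irr.
rewrite /hsum big_setU1 //=.
have -> : \sum_(u in AN e h v) (h u : nat) = \sum_(u in AN e h v) (h u - 1) + #|AN e h v|.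
  rewrite -sum1_card -big_split /=; apply: eq_bigr => u.
  by rewrite inE => /andP [_ hu]; rewrite subnK.
have -> : \sum_(u in AN e h v) (h u - 1) = \sum_(w in nbr e v) (h w - 1).
  rewrite (bigID (fun w => 1 <= h w) (mem (nbr e v))) /=.
  rewrite [X in _ = _ + X]big1; last by move=> w /andP [_]; rewrite -ltnNge ltnS leqn0 => /eqP ->.
  by rewrite addn0; apply: eq_bigl => w; rewrite inE.
lia.
Qed.

Lemma card_ge2 (h : {ffun T -> 'I_5}) :
  #|[set v | 2 <= h v]| = \sum_v (2 <= h v : nat).
Proof.
rewrite -sum1_card big_mkcond /=; apply: eq_bigr => v _; rewrite inE.
by case: (2 <= h v).
Qed.

Lemma lower (h : {ffun T -> 'I_5}) : is3RDF e h -> 0 < maxdeg e ->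
  2 * #|T| + (maxdeg e - 1) * #|[set v | 2 <= h v]| <= maxdeg e * weight h.
Proof.
move=> H3 Dpos; rewrite card_ge2 /weight.
set D := maxdeg e.
have [D1|D2] := leqP D 1.
  have DE : D = 1 by lia.
  have N : \sum_(v | h v < 3) (2 - h v) <= D * \sum_w (h w - 2).
    apply: leq_trans (charge _ _); apply: leq_sum => v hv.
    have L := local h v H3 hv.
    have : \sum_(w in nbr e v) (h w - 1) <= \sum_(w in nbr e v) (h w - 2) + #|nbr e v|.
      rewrite -sum1_card -big_split /=; apply: leq_sum => w _; lia.
    have := deg_le v; rewrite /deg -/D; lia.
  rewrite big_mkcond /= in N.
  have pw : \sum_v (2 + (h v - 2)) <= \sum_v ((h v : nat) + (if h v < 3 then 2 - h v else 0)).
    apply: leq_sum => v _; case: (h v) => [[|[|[|[|[|k]]]]] Hk] //=.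
  have E2 : \sum_(v : T) 2 = 2 * #|T| by rewrite sum_nat_const mulnC.
  rewrite !big_split /= E2 in pw.
  rewrite DE subnn mul0n addn0 mul1n.
  rewrite DE mul1n in N.

  lia.
have N : \sum_(v | h v < 3) (3 - h v) <= D * \sum_w (h w - 1).
  apply: leq_trans (charge _ _); apply: leq_sum => v hv.
  exact: local h v H3 hv.
rewrite big_mkcond /= in N.
have pw : \sum_v (6 + 3 * (D - 1) * (2 <= h v) + 2 * D * (h v - 1)) <=
          \sum_v (3 * D * h v + 2 * (if h v < 3 then 3 - h v else 0)).
  apply: leq_sum => v _; case: (h v) => [[|[|[|[|[|k]]]]] Hk] //=; nia.
have E6 : \sum_(v : T) 6 = 6 * #|T| by rewrite sum_nat_const mulnC.
rewrite !big_split /= E6 -!big_distrr /= in pw.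
rewrite big1_eq addn0 in pw.
move: pw N; move: (\sum_i _) (\sum_i _) (\sum_i _) (\sum_i _) => a b c d.
clearbody D; move: #|T| => n; case: D D2 => [|D'] // _; rewrite subSS subn0 => H1 H2.
suff : 3 * (2 * n + D' * d) <= 3 * (D'.+1 * b) by rewrite leq_mul2l.
nia.
Qed.
Lemma dom_le (S : {set T}) : dominating e S -> domination_number e <= #|S|.
Proof. by move=> dS; exact: bigmin_le. Qed.

Lemma dom_ge2 (h : {ffun T -> 'I_5}) : is3RDF e h ->
  dominating e [set v | 2 <= h v].
Proof.
move=> H3; apply/forallP => v; rewrite inE.
case: leqP => //= hv.
case: (boolP [exists w in [set v | 2 <= h v], e v w]) => // /existsPn Hn.
have L := local h v H3 (leq_ltn_trans hv (isT : 1 < 3)).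
rewrite big1 in L; first by move: hv L; case: (nat_of_ord (h v)) => [|[|[|k]]].
move=> w; rewrite inE => ew; move: (Hn w); rewrite inE ew andbT -ltnNge.
by case: (nat_of_ord (h w)) => [|[|k]].
Qed.

Lemma ceil_le (h : {ffun T -> 'I_5}) : is3RDF e h ->
  ceil_div (2 * #|T| + (maxdeg e - 1) * domination_number e) (maxdeg e) <= weight h.
Proof.
move=> H3; rewrite /ceil_div.
case: (posnP (maxdeg e)) => [->|Dpos]; first by rewrite divn0.
have L := lower h H3 Dpos.
have G := dom_le _ (dom_ge2 h H3).
rewrite -ltnS ltn_divLR //.
move: L G; move: (maxdeg e) Dpos (domination_number e) (weight h) #|[set v | 2 <= h v]| #|T|
  => [|D] // _ g w c n L G.
rewrite subSS subn0 /= in L *.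
have : D * g <= D * c by rewrite leq_mul2l G orbT.
nia.
Qed.
End S.

Theorem proposition19 (T : finType) (e : rel T)
  (e_sym : symmetric e) (e_irr : irreflexive e)
  (e_conn : forall x y : T, connect e x y)
  (p2 : 2 <= #|T|) :
  ceil_div (2 * #|T| + (maxdeg e - 1) * domination_number e) (maxdeg e)
    <= triple_roman_number e
  /\
  ((exists v : T, forall w : T, w != v -> e v w) ->
   triple_roman_number e =
   ceil_div (2 * #|T| + (maxdeg e - 1) * domination_number e) (maxdeg e)).
Proof.
have part1 : ceil_div (2 * #|T| + (maxdeg e - 1) * domination_number e) (maxdeg e)
    <= triple_roman_number e.
  rewrite /triple_roman_number; elim/big_ind: _.
  - pose h4 : {ffun T -> 'I_5} := [ffun => inord 4].
    have H4 : is3RDF e h4 by apply/forallP => v; rewrite ffunE inordK.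
    have := @ceil_le T e e_sym e_irr h4 H4.
    suff -> : weight h4 = 4 * #|T| by [].
    rewrite /weight (eq_bigr (fun _ => 4)); first by rewrite sum_nat_const mulnC.
    by move=> v _; rewrite ffunE inordK.
  - by move=> x y; rewrite leq_min => -> ->.
  - by move=> h; apply: ceil_le.
split => //.
case=> v Hv; apply/eqP; rewrite eqn_leq part1 andbT.
pose h0 : {ffun T -> 'I_5} := [ffun w => if w == v then inord 4 else ord0].
have H0 : is3RDF e h0.
  apply/forallP => w; apply/implyP; rewrite ffunE.
  case: eqP => [->|/eqP wv _]; first by rewrite inordK.
  have -> : AN e h0 w = [set v].
    apply/setP => u; rewrite !inE ffunE.
    case: eqP => [->|_]; first by rewrite inordK // e_sym Hv // eq_sym.
    by rewrite andbF.
  by rewrite cards1 /hsum big_setU1 ?inE //= big_set1 !ffunE eqxx (negPf wv) inordK.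
have W0 : weight h0 = 4.
  rewrite /weight (bigD1 v) //= big1 ?ffunE ?eqxx ?inordK //.
  by move=> u /negPf uv; rewrite ffunE uv.
apply: (@leq_trans 4); first by rewrite -W0 /triple_roman_number; exact: (@bigmin_le _ (fun h => is3RDF e h) (fun h => weight h) _ h0 H0).
have [w wv] : exists w, w \in predC1 v.
  by apply/card_gt0P; rewrite cardC1; case: #|T| p2 => [|[|n]].
have Dpos : 0 < maxdeg e.
  apply: leq_trans (deg_le _ e v); apply/card_gt0P; exists w.
  by rewrite inE Hv.
have Dle : maxdeg e <= #|T|.-1.
  apply/bigmax_leqP => u _; rewrite -(cardC1 u); apply: subset_leq_card.
  apply/subsetP => x; rewrite !inE; case: eqP => // ->; by rewrite e_irr.
have G1 : 0 < domination_number e.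
  rewrite /domination_number; elim/big_ind: _.
  - by apply: leq_trans p2.
  - by move=> x y; rewrite leq_min => -> ->.
  - move=> S /forallP /(_ v) /orP [vS|/existsP [u /andP [uS _]]];
    by apply/card_gt0P; eexists; eauto.
rewrite /ceil_div leq_divRL //.
move: Dpos Dle G1; move: (maxdeg e) (domination_number e) #|T| p2 => D g n _ H1 H2 H3.
case: D H1 H2 => [|D] // _; case: n => [|n] //= H2; rewrite subSS subn0.
nia.
Qed.
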